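(* Let $\phi$ be an IPC formula disjunctive in the variable $x$. Then for every Heyting algebra $H$ and every valuation $v$ in $H$ of the variables of $\phi$ other than $x$, the monotone map $h\mapsto[\![\phi]\!]_{(v,h/x)}$ has a least fixed point, equal to the value under $v$ of $\big(\bigwedge_{\alpha\in\mathrm{Head}(\phi)}\alpha\big)\to\big(\bigvee_{\beta\in\mathrm{Side}(\phi)}\beta\big)$ (empty meet $=\top$, empty join $=\bot$).
   Context: A formula is disjunctive in $x$ if it is generated by the grammar $\phi ::= x \mid \alpha\to\phi \mid \beta\vee\phi \mid \phi\vee\phi$, where $\alpha,\beta$ range over IPC formulas not containing $x$ (disjunctions up to commutativity). $\mathrm{Head}(\phi)$ is the set of formulas $\alpha$ used in productions $\alpha\to\phi'$ in the parse of $\phi$; $\mathrm{Side}(\phi)$ is the set of formulas $\beta$ used in productions $\beta\vee\phi'$. $(v,h/x)$ extends $v$ by sending $x$ to $h$. *)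

(* Defs.v *)
From Stdlib Require Import List Arith.
Import ListNotations.
Set Implicit Arguments.

Inductive form : Type :=
| FVar : nat -> form
| FBot : form
| FTop : form
| FAnd : form -> form -> form
| FOr  : form -> form -> form
| FImp : form -> form -> form.

Fixpoint occurs (x : nat) (p : form) : bool :=
  match p with
  | FVar y => Nat.eqb x y
  | FBot | FTop => false
  | FAnd a b | FOr a b | FImp a b => occurs x a || occurs x b
  end.

Record HeytingAlgebra := {
  car :> Type;
  le : car -> car -> Prop;
  meet : car -> car -> car;
  join : car -> car -> car;
  imp : car -> car -> car;
  top : car;
  bot : car;
  le_refl : forall a, le a a;
  le_trans : forall a b c, le a b -> le b c -> le a c;
  le_antisym : forall a b, le a b -> le b a -> a = b;
  meet_glb : forall a b c, le c (meet a b) <-> (le c a /\ le c b);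
  join_lub : forall a b c, le (join a b) c <-> (le a c /\ le b c);
  top_greatest : forall a, le a top;
  bot_least : forall a, le bot a;
  imp_adj : forall a b c, le c (imp a b) <-> le (meet c a) b
}.

Fixpoint eval (H : HeytingAlgebra) (v : nat -> H) (p : form) : H :=
  match p with
  | FVar y => v y
  | FBot => bot H
  | FTop => top H
  | FAnd a b => meet H (eval H v a) (eval H v b)
  | FOr a b => join H (eval H v a) (eval H v b)
  | FImp a b => imp H (eval H v a) (eval H v b)
  end.
Arguments eval {H} v p.

Definition upd (H : HeytingAlgebra) (v : nat -> H) (x : nat) (h : H) : nat -> H :=
  fun y => if Nat.eqb y x then h else v y.

(* Parse trees of the grammar  phi ::= x | alpha -> phi | beta \/ phi | phi \/ phi,
   with beta \/ phi taken up to commutativity (DOrL / DOrR). *)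
Inductive dtree : Type :=
| DX : dtree
| DImp : form -> dtree -> dtree
| DOrL : form -> dtree -> dtree
| DOrR : dtree -> form -> dtree
| DOr : dtree -> dtree -> dtree.

Fixpoint dform (x : nat) (t : dtree) : form :=
  match t with
  | DX => FVar x
  | DImp a t' => FImp a (dform x t')
  | DOrL b t' => FOr b (dform x t')
  | DOrR t' b => FOr (dform x t') b
  | DOr t1 t2 => FOr (dform x t1) (dform x t2)
  end.

Fixpoint dwf (x : nat) (t : dtree) : bool :=
  match t with
  | DX => true
  | DImp a t' => negb (occurs x a) && dwf x t'
  | DOrL b t' | DOrR t' b => negb (occurs x b) && dwf x t'
  | DOr t1 t2 => dwf x t1 && dwf x t2
  end.

Definition disjunctive (x : nat) (p : form) : Prop :=
  exists t, dwf x t = true /\ dform x t = p.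

Fixpoint Head (t : dtree) : list form :=
  match t with
  | DX => []
  | DImp a t' => a :: Head t'
  | DOrL _ t' | DOrR t' _ => Head t'
  | DOr t1 t2 => Head t1 ++ Head t2
  end.

Fixpoint Side (t : dtree) : list form :=
  match t with
  | DX => []
  | DImp _ t' => Side t'
  | DOrL b t' | DOrR t' b => b :: Side t'
  | DOr t1 t2 => Side t1 ++ Side t2
  end.

Definition bigAnd (l : list form) : form := fold_right FAnd FTop l.
Definition bigOr (l : list form) : form := fold_right FOr FBot l.

Definition is_least_fixed_point (H : HeytingAlgebra) (f : H -> H) (m : H) : Prop :=
  f m = m /\ forall h, f h = h -> le H m h.
Arguments upd {H} v x h.
Arguments is_least_fixed_point {H} f m.

(* Main.v *)
Require Import Defs.
From Stdlib Require Import List Arith Bool.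
Import ListNotations.

Section Lat.
Variable H : HeytingAlgebra.
Local Notation "a <<= b" := (le H a b) (at level 70).
Local Notation "a ⊓ b" := (meet H a b) (at level 40, left associativity).
Local Notation "a ⊔ b" := (join H a b) (at level 50, left associativity).

Lemma lt_ a b c : a <<= b -> b <<= c -> a <<= c.
Proof. apply le_trans. Qed.
Lemma ml a b : a ⊓ b <<= a.
Proof. apply (proj1 (proj1 (meet_glb H a b _) (le_refl H _))). Qed.
Lemma mr a b : a ⊓ b <<= b.
Proof. apply (proj2 (proj1 (meet_glb H a b _) (le_refl H _))). Qed.
Lemma mi a b c : c <<= a -> c <<= b -> c <<= a ⊓ b.
Proof. intros; apply meet_glb; auto. Qed.
Lemma jl a b : a <<= a ⊔ b.
Proof. apply (proj1 (proj1 (join_lub H a b _) (le_refl H _))). Qed.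
Lemma jr a b : b <<= a ⊔ b.
Proof. apply (proj2 (proj1 (join_lub H a b _) (le_refl H _))). Qed.
Lemma je a b c : a <<= c -> b <<= c -> a ⊔ b <<= c.
Proof. intros; apply join_lub; auto. Qed.
Lemma ii a b c : c ⊓ a <<= b -> c <<= imp H a b.
Proof. apply imp_adj. Qed.
Lemma ie a b : imp H a b ⊓ a <<= b.
Proof. apply imp_adj, le_refl. Qed.
Lemma mp c a b : c <<= imp H a b -> c <<= a -> c <<= b.
Proof. intros. eapply lt_; [|apply (ie a)]. apply mi; auto. Qed.
Lemma mm a b a' b' : a <<= a' -> b <<= b' -> a ⊓ b <<= a' ⊓ b'.
Proof. intros; apply mi; [eapply lt_; [apply ml|auto]|eapply lt_; [apply mr|auto]]. Qed.
Lemma jm a b a' b' : a <<= a' -> b <<= b' -> a ⊔ b <<= a' ⊔ b'.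
Proof. intros; apply je; [eapply lt_; [eauto|apply jl]|eapply lt_; [eauto|apply jr]]. Qed.
Lemma imr a b b' : b <<= b' -> imp H a b <<= imp H a b'.
Proof. intros; apply ii; eapply lt_; [apply ie|auto]. Qed.
Lemma iw a b : b <<= imp H a b.
Proof. apply ii, ml. Qed.
Lemma distr a b c : a ⊓ (b ⊔ c) <<= (a ⊓ b) ⊔ (a ⊓ c).
Proof.
  assert (b ⊔ c <<= imp H a ((a ⊓ b) ⊔ (a ⊓ c))).
  { apply je; apply ii.
    - eapply lt_; [|apply jl]. apply mi; [apply mr|apply ml].
    - eapply lt_; [|apply jr]. apply mi; [apply mr|apply ml]. }
  eapply lt_; [|apply (ie a)].
  apply mi; [eapply lt_; [apply mr|exact H0]|apply ml].
Qed.
Lemma case_join c d e h : c <<= d ⊔ e -> c ⊓ d <<= h -> c ⊓ e <<= h -> c <<= h.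
Proof.
  intros. eapply lt_; [|eapply lt_; [apply (distr c d e)|apply je; eauto]].
  apply mi; auto using le_refl.
Qed.
Lemma meet_assoc a b c : a ⊓ (b ⊓ c) = a ⊓ b ⊓ c.
Proof.
  apply le_antisym; repeat apply mi; eauto using ml, mr, lt_.
Qed.
Lemma join_assoc a b c : a ⊔ (b ⊔ c) = a ⊔ b ⊔ c.
Proof.
  apply le_antisym; repeat apply je; eauto using jl, jr, lt_.
Qed.
Lemma meet_top a : top H ⊓ a = a.
Proof. apply le_antisym. apply mr. apply mi; auto using top_greatest, le_refl. Qed.
Lemma join_bot a : bot H ⊔ a = a.
Proof. apply le_antisym. apply je; auto using bot_least, le_refl. apply jr. Qed.

Variable v : nat -> H.
Variable x : nat.

Lemma bigAnd_app l1 l2 : eval v (bigAnd (l1 ++ l2)) = eval v (bigAnd l1) ⊓ eval v (bigAnd l2).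
Proof.
  induction l1; simpl. symmetry; apply meet_top.
  change (eval v a ⊓ eval v (bigAnd (l1 ++ l2)) = eval v a ⊓ eval v (bigAnd l1) ⊓ eval v (bigAnd l2)).
  rewrite IHl1; apply meet_assoc.
Qed.
Lemma bigOr_app l1 l2 : eval v (bigOr (l1 ++ l2)) = eval v (bigOr l1) ⊔ eval v (bigOr l2).
Proof.
  induction l1; simpl. symmetry; apply join_bot.
  change (eval v a ⊔ eval v (bigOr (l1 ++ l2)) = eval v a ⊔ eval v (bigOr l1) ⊔ eval v (bigOr l2)).
  rewrite IHl1; apply join_assoc.
Qed.
Lemma bigAnd_cons a l : eval v (bigAnd (a :: l)) = eval v a ⊓ eval v (bigAnd l).
Proof. reflexivity. Qed.
Lemma bigOr_cons a l : eval v (bigOr (a :: l)) = eval v a ⊔ eval v (bigOr l).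
Proof. reflexivity. Qed.
Lemma bigAnd_nil : eval v (bigAnd []) = top H. Proof. reflexivity. Qed.
Lemma bigOr_nil : eval v (bigOr []) = bot H. Proof. reflexivity. Qed.

Lemma eval_free h p : occurs x p = false -> eval (upd v x h) p = eval v p.
Proof.
  induction p; simpl; intros Ho; try reflexivity;
    try (apply orb_false_iff in Ho; destruct Ho; rewrite IHp1, IHp2 by auto; reflexivity).
  unfold upd. rewrite Nat.eqb_sym, Ho. reflexivity.
Qed.

Definition f s h := eval (upd v x h) (dform x s).
Definition A s := eval v (bigAnd (Head s)).
Definition B s := eval v (bigOr (Side s)).

Ltac prep := unfold f, A, B in *; cbn [dform Head Side eval] in *;
  rewrite ?bigAnd_app, ?bigOr_app, ?bigAnd_cons, ?bigOr_cons, ?bigAnd_nil, ?bigOr_nil in *.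

Ltac wf Hwf := cbn [dwf] in Hwf; repeat rewrite andb_true_iff in Hwf;
  repeat rewrite negb_true_iff in Hwf.

Lemma fX h : upd v x h x = h.
Proof. unfold upd. rewrite Nat.eqb_refl. reflexivity. Qed.

Lemma eval_free2 p : occurs x p = false -> forall h, eval (upd v x h) p = eval v p.
Proof. intros; apply eval_free; auto. Qed.

Lemma mono s : dwf x s = true -> forall h1 h2, h1 <<= h2 -> f s h1 <<= f s h2.
Proof.
  induction s; intros Hw h1 h2 Hle; wf Hw; prep.
  - rewrite !fX; auto.
  - rewrite !(eval_free2 f0) by tauto. apply imr. apply IHs; tauto.
  - rewrite !(eval_free2 f0) by tauto. apply jm. apply le_refl. apply IHs; tauto.
  - rewrite !(eval_free2 f0) by tauto. apply jm. apply IHs; tauto. apply le_refl.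
  - apply jm; [apply IHs1|apply IHs2]; tauto.
Qed.

Lemma infl s : dwf x s = true -> forall h, h <<= f s h.
Proof.
  induction s; intros Hw h; wf Hw; prep.
  - rewrite fX; apply le_refl.
  - eapply lt_; [apply IHs; tauto|apply iw].
  - eapply lt_; [apply IHs; tauto|apply jr].
  - eapply lt_; [apply IHs; tauto|apply jl].
  - eapply lt_; [apply IHs1; tauto|apply jl].
Qed.

Lemma sideB s : dwf x s = true -> forall h, B s <<= f s h.
Proof.
  induction s; intros Hw h; wf Hw; prep.
  - apply bot_least.
  - rewrite !(eval_free2 f0) by tauto. eapply lt_; [apply IHs; tauto|apply iw].
  - rewrite !(eval_free2 f0) by tauto. apply jm. apply le_refl. apply IHs; tauto.
  - rewrite !(eval_free2 f0) by tauto. apply je. apply jr. eapply lt_; [apply IHs; tauto|apply jl].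
  - apply jm; [apply IHs1|apply IHs2]; tauto.
Qed.

Lemma three s : dwf x s = true -> forall h, f s h ⊓ A s <<= h ⊔ B s.
Proof.
  induction s; intros Hw h; wf Hw; prep.
  - rewrite fX. eapply lt_; [apply ml|apply jl].
  - rewrite !(eval_free2 f0) by tauto. eapply lt_; [|apply IHs; tauto].
    apply mi. eapply lt_; [|apply ie]. apply mm. apply le_refl. apply ml.
    eapply lt_; apply mr.
  - rewrite !(eval_free2 f0) by tauto.
    eapply lt_. rewrite <- (le_antisym _ _ _ (mi _ _ _ (mr _ _) (ml _ _)) (mi _ _ _ (mr _ _) (ml _ _))).
    apply distr. apply je.
    + eapply lt_; [apply mr|]. eapply lt_; [apply jl|apply jr].
    + eapply lt_. apply mi; [apply mr|apply ml]. eapply lt_; [apply IHs; tauto|].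
      apply je. apply jl. eapply lt_; [apply jr|apply jr].
  - rewrite !(eval_free2 f0) by tauto.
    eapply lt_. apply mi; [apply mr|apply ml]. eapply lt_; [apply distr|]. apply je.
    + eapply lt_. apply mi; [apply mr|apply ml]. eapply lt_; [apply IHs; tauto|].
      apply je. apply jl. eapply lt_; [apply jr|apply jr].
    + eapply lt_; [apply mr|]. eapply lt_; [apply jl|apply jr].
  - eapply lt_. apply mi; [apply mr|apply ml]. eapply lt_; [apply distr|]. apply je.
    + eapply lt_. apply mi; [apply mr|eapply lt_; [apply ml|apply ml]].
      eapply lt_; [apply IHs1; tauto|].
      apply je. apply jl. eapply lt_; [apply jl|apply jr].
    + eapply lt_. apply mi; [apply mr|eapply lt_; [apply ml|apply mr]].
      eapply lt_; [apply IHs2; tauto|].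
      apply je. apply jl. eapply lt_; [apply jr|apply jr].
Qed.

Lemma Q s : dwf x s = true -> forall h c d, c ⊓ f s h <<= h -> c ⊓ d <<= h ->
  c <<= imp H (A s) (d ⊔ B s) -> c <<= h.
Proof.
  induction s; intros Hw h c d H1 H2 H3; wf Hw; prep.
  - apply (case_join c d (bot H)); auto.
    eapply mp; eauto. apply top_greatest.
    eapply lt_; [apply mr|apply bot_least].
  - rewrite !(eval_free2 f0) in H1 by tauto.
    assert (Ha : c <<= imp H (eval v f0) h).
    { apply ii. apply (IHs ltac:(tauto) h _ d).
      - eapply lt_; [|exact H1]. apply mi. eapply lt_; [apply ml|apply ml].
        eapply lt_; [apply mr|apply iw].
      - eapply lt_; [|exact H2]. apply mm; [apply ml|apply le_refl].
      - apply ii. eapply mp. eapply lt_; [apply ml|]. eapply lt_; [apply ml|exact H3].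
        apply mi. eapply lt_; [apply ml|apply mr]. apply mr. }
    eapply lt_; [|exact H1]. apply mi. apply le_refl.
    eapply lt_; [exact Ha|]. apply imr. apply infl; tauto.
  - rewrite !(eval_free2 f0) in H1 by tauto.
    apply (IHs ltac:(tauto) h c (d ⊔ eval v f0)).
    + eapply lt_; [|exact H1]. apply mm; [apply le_refl|apply jr].
    + eapply lt_; [apply distr|]. apply je; auto.
      eapply lt_; [|exact H1]. apply mm; [apply le_refl|apply jl].
    + eapply lt_; [exact H3|]. apply imr. rewrite join_assoc. apply le_refl.
  - rewrite !(eval_free2 f0) in H1 by tauto.
    apply (IHs ltac:(tauto) h c (d ⊔ eval v f0)).
    + eapply lt_; [|exact H1]. apply mm; [apply le_refl|apply jl].
    + eapply lt_; [apply distr|]. apply je; auto.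
      eapply lt_; [|exact H1]. apply mm; [apply le_refl|apply jr].
    + eapply lt_; [exact H3|]. apply imr. rewrite join_assoc. apply le_refl.
  - set (f1 := eval (upd v x h) (dform x s1)) in *.
    set (f2 := eval (upd v x h) (dform x s2)) in *.
    assert (E1 : c ⊓ f1 <<= h) by (eapply lt_; [|exact H1]; apply mm; [apply le_refl|apply jl]).
    assert (E2 : c ⊓ f2 <<= h) by (eapply lt_; [|exact H1]; apply mm; [apply le_refl|apply jr]).
    assert (B1 : c ⊓ eval v (bigOr (Side s1)) <<= h).
    { eapply lt_; [|exact E1]. apply mm; [apply le_refl|]. apply (sideB s1); tauto. }
    assert (Ha : c <<= imp H (eval v (bigAnd (Head s1))) h).
    { apply ii. apply (IHs2 ltac:(tauto) h _ (d ⊔ eval v (bigOr (Side s1)))).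
      - eapply lt_; [|exact E2]. apply mm; [apply ml|apply le_refl].
      - eapply lt_; [apply distr|]. apply je.
        + eapply lt_; [|exact H2]. apply mm; [apply ml|apply le_refl].
        + eapply lt_; [|exact B1]. apply mm; [apply ml|apply le_refl].
      - apply ii. eapply lt_. eapply mp. eapply lt_; [apply ml|]. eapply lt_; [apply ml|exact H3].
        apply mi. eapply lt_; [apply ml|apply mr]. apply mr.
        rewrite join_assoc. apply le_refl. }
    apply (IHs1 ltac:(tauto) h c h E1 (mr _ _)).
    eapply lt_; [exact Ha|]. apply imr, jl.
Qed.

End Lat.

Theorem mainTheorem12 (x : nat) (t : dtree) (Hwf : dwf x t = true)
  (H : HeytingAlgebra) (v : nat -> H) :
  (forall h1 h2 : H, le H h1 h2 ->
     le H (eval (upd v x h1) (dform x t)) (eval (upd v x h2) (dform x t))) /\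
  is_least_fixed_point (fun h : H => eval (upd v x h) (dform x t))
    (eval v (FImp (bigAnd (Head t)) (bigOr (Side t)))).
Proof.
  split; [exact (mono H v x t Hwf)|]. split.
  - simpl. apply le_antisym.
    + apply ii. apply (case_join H _ _ (B H v t) _ (three H v x t Hwf _)).
      * apply (lt_ H _ (meet H (imp H (A H v t) (B H v t)) (A H v t))); [|apply ie].
        apply mi; [apply mr|eapply lt_; [apply ml|apply mr]].
      * apply mr.
    + apply (infl H v x t Hwf).
  - intros h Hh. simpl. apply (Q H v x t Hwf h _ (bot H)).
    + unfold f. rewrite Hh. apply mr.
    + eapply lt_; [apply mr|apply bot_least].
    + apply imr. apply jr.
Qed.
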